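(* Let $\mathfrak{A}=(V,\mu)$ be a finite-dimensional anti-commutative algebra over a field $\mathbb{K}$ of characteristic zero, and suppose $\mathfrak{B}$ is a subalgebra of $\mathfrak{A}$ such that $V$ is the (vector space) direct sum of $\mathfrak{B}$ and the center $\mathcal{Z}(\mathfrak{A})$. Let $t\in\mathbb{K}$, $t\neq 0$. Then $\mathcal{D}(t,1,0)(\mathfrak{A})$ is a vector space isomorphic to $\mathcal{D}(t,1,0)(\mathfrak{B})\times L(\mathfrak{A}/\mathfrak{A}^{(2)};\mathcal{Z}(\mathfrak{A}))$.
   Context: An anti-commutative algebra is a vector space $V$ with a bilinear map $\mu$ satisfying $\mu(X,Y)=-\mu(Y,X)$. For $\alpha,\beta,\gamma\in\mathbb{K}$, an $(\alpha,\beta,\gamma)$-derivation of $(V,\mu)$ is a linear map $D:V\to V$ with $\alpha D\mu(X,Y)=\beta\mu(DX,Y)+\gamma\mu(X,DY)$ for all $X,Y$; their space is $\mathcal{D}(\alpha,\beta,\gamma)(V,\mu)$. The center is $\mathcal{Z}(\mathfrak{A})=\{X:\mu(X,Y)=0\ \forall Y\in V\}$; the derived algebra $\mathfrak{A}^{(2)}$ is the linear span of all products $\mu(X,Y)$. $L(U;W)$ denotes the space of linear maps from $U$ to $W$. *)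

(* Defs.v *)
From HB Require Import structures.
From mathcomp Require Import all_boot all_order all_algebra.
Set Implicit Arguments. Unset Strict Implicit. Unset Printing Implicit Defensive.
Import GRing.Theory.
Local Open Scope ring_scope.

Definition is_derivation (K : fieldType) (V : vectType K) (mu : V -> V -> V)
  (a b c : K) (D : 'End(V)) : Prop :=
  forall X Y : V, a *: D (mu X Y) = b *: mu (D X) Y + c *: mu X (D Y).

Definition central (K : fieldType) (V : vectType K) (mu : V -> V -> V) (X : V) : Prop :=
  forall Y : V, mu X Y = 0.

(* restriction of the product to a subspace B (meaningful when B is a subalgebra) *)
Definition restr_mul (K : fieldType) (V : vectType K) (mu : V -> V -> V)
  (B : {vspace V}) (x y : subvs_of B) : subvs_of B :=
  vsproj B (mu (vsval x) (vsval y)).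

(* L(A/A^(2); Z(A)) realised (via the universal property of the quotient)
   as the linear maps F : V -> V vanishing on all products mu X Y (hence on
   A^(2)) and with values in the center Z(A). *)
Definition quot_to_center (K : fieldType) (V : vectType K) (mu : V -> V -> V)
  (F : 'End(V)) : Prop :=
  (forall X Y : V, F (mu X Y) = 0) /\ (forall X : V, central mu (F X)).
Arguments restr_mul {K V} mu B x y.

(* Main.v *)
Require Import Defs.
From HB Require Import structures.
From mathcomp Require Import all_boot all_order all_algebra.
From Stdlib Require Import ClassicalEpsilon.
Import GRing.Theory.
Local Open Scope ring_scope.

Lemma linfunE' (K : fieldType) (aT rT : vectType K) (f : aT -> rT) (hf : linear f) x :
  linfun f x = f x.
Proof.
pose F : {linear aT -> rT} := HB.pack f (GRing.isLinear.Build _ _ _ _ f hf).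
exact: (lfunE F x).
Qed.

Theorem lemma2p6 (K : fieldType) (V : vectType K) (mu : V -> V -> V)
  (hchar : [pchar K] =i pred0)
  (hlinl : forall Y : V, linear (fun X => mu X Y))
  (hlinr : forall X : V, linear (mu X))
  (hanti : forall X Y : V, mu X Y = - mu Y X)
  (B : {vspace V})
  (hsub : forall X Y : V, X \in B -> Y \in B -> mu X Y \in B)
  (hspan : forall v : V, exists b z : V, [/\ b \in B, central mu z & v = b + z])
  (hdisj : forall v : V, v \in B -> central mu v -> v = 0)
  (t : K) (ht : t != 0) :
  exists phi : 'End(V) -> 'End(subvs_of B) * 'End(V),
    [/\ linear phi,
        (forall D, is_derivation mu t 1 0 D ->
           is_derivation (restr_mul mu B) t 1 0 (phi D).1 /\
           quot_to_center mu (phi D).2),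
        (forall D1 D2, is_derivation mu t 1 0 D1 -> is_derivation mu t 1 0 D2 ->
           phi D1 = phi D2 -> D1 = D2)
      & (forall E F, is_derivation (restr_mul mu B) t 1 0 E -> quot_to_center mu F ->
           exists D, is_derivation mu t 1 0 D /\ phi D = (E, F))].
Proof.
have muDl : forall X1 X2 Y, mu (X1 + X2) Y = mu X1 Y + mu X2 Y.
  by move=> X1 X2 Y; have := hlinl Y 1 X1 X2; rewrite !scale1r.
have muDr : forall X Y1 Y2, mu X (Y1 + Y2) = mu X Y1 + mu X Y2.
  by move=> X Y1 Y2; have := hlinr X 1 Y1 Y2; rewrite !scale1r.
have mu0l : forall Y, mu 0 Y = 0.
  move=> Y; have := muDl 0 0 Y; rewrite addr0 => h.
  by apply: (addrI (mu 0 Y)); rewrite addr0 -h.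
have centralD : forall (a : K) u v, central mu u -> central mu v -> central mu (a *: u + v).
  by move=> a u v hu hv Y; rewrite (hlinl Y a u v) /= hu hv scaler0 addr0.
have central0 : central mu 0 by move=> Y; exact: mu0l.
have centralN : forall u, central mu u -> central mu (- u).
  by move=> u hu; have := centralD (-1) u 0 hu central0; rewrite addr0 scaleN1r.
have centralB : forall u v, central mu u -> central mu v -> central mu (u - v).
  by move=> u v hu hv; have := centralD 1 u (- v) hu (centralN v hv); rewrite scale1r.
have [pB [pB_B pB_Z]] : exists pB : V -> V, (forall v, pB v \in B) /\ (forall v, central mu (v - pB v)).
  have ex : forall v, exists b, b \in B /\ central mu (v - b).
    move=> v; have [b [z [hb hz ->]]] := hspan v.
    by exists b; split => //; rewrite addrC addKr.
  exists (fun v => proj1_sig (constructive_indefinite_description _ (ex v))).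
  by split => v; case: (constructive_indefinite_description _ (ex v)) => b [].
have pB_uniq : forall v b, b \in B -> central mu (v - b) -> pB v = b.
  move=> v b hb hz; apply/eqP; rewrite -subr_eq0; apply/eqP; apply: hdisj.
    by rewrite memvB.
  have -> : pB v - b = (v - b) - (v - pB v) by rewrite opprB [_ + (_ - v)]addrC addrA subrK.
  exact: centralB.
have pB_lin : linear pB.
  move=> a u v; apply: pB_uniq; first by rewrite memvD // memvZ.
  have -> : a *: u + v - (a *: pB u + pB v) = a *: (u - pB u) + (v - pB v).
    by rewrite scalerBr opprD addrACA.
  exact: centralD.
have pB_id : forall b, b \in B -> pB b = b.
  by move=> b hb; apply: pB_uniq => //; rewrite subrr.
have pB_Z0 : forall z, central mu z -> pB z = 0.
  by move=> z hz; apply: pB_uniq; rewrite ?mem0v // subr0.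
have pB_pB : forall v, pB (pB v) = pB v by move=> v; exact: pB_id.
have mu_pB : forall X Y, mu X Y = mu (pB X) (pB Y).
  move=> X Y.
  rewrite -{1}(subrK (pB X) X) -{1}(subrK (pB Y) Y) muDl (pB_Z (X)) add0r.
  by rewrite muDr hanti (pB_Z Y) oppr0 add0r.
have mu_inB : forall X Y, mu X Y \in B.
  by move=> X Y; rewrite mu_pB; apply: hsub.
have hDs : forall D : 'End(V), is_derivation mu t 1 0 D ->
    forall X Y, t *: D (mu X Y) = mu (D X) Y.
  by move=> D hD X Y; rewrite hD scale1r scale0r addr0.
have D_central : forall D : 'End(V), is_derivation mu t 1 0 D ->
    forall z, central mu z -> central mu (D z).
  by move=> D hD z hz Y; rewrite -hDs // hz linear0 scaler0.
have D_muB : forall D : 'End(V), is_derivation mu t 1 0 D ->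
    forall X Y, D (mu X Y) \in B.
  move=> D hD X Y; rewrite -[D _]scale1r -(mulVf ht) -scalerA hDs //.
  by rewrite memvZ.
have linE : forall D : 'End(V), linear (fun x : subvs_of B => vsproj B (pB (D (vsval x)))).
  by move=> D a x y; rewrite !linearP /= pB_lin linearP.
have linF : forall D : 'End(V), linear (fun v => D v - pB (D v)).
  move=> D a x y; rewrite linearP pB_lin /=.
  by rewrite scalerBr opprD addrACA.
pose phi := fun D : 'End(V) =>
  (linfun (fun x : subvs_of B => vsproj B (pB (D (vsval x)))), linfun (fun v => D v - pB (D v))).
have phi1 : forall D x, (phi D).1 x = vsproj B (pB (D (vsval x))).
  by move=> D x; rewrite /phi /= linfunE' //; exact: linE.
have phi2 : forall D x, (phi D).2 x = D x - pB (D x).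
  by move=> D x; rewrite /phi /= linfunE' //; exact: linF.
exists phi; split.
- move=> a D1 D2.
  have e1 : (phi (a *: D1 + D2)).1 = a *: (phi D1).1 + (phi D2).1.
    apply/lfunP => x.
    by rewrite add_lfunE scale_lfunE !phi1 add_lfunE scale_lfunE pB_lin linearP.
  have e2 : (phi (a *: D1 + D2)).2 = a *: (phi D1).2 + (phi D2).2.
    apply/lfunP => x.
    rewrite add_lfunE scale_lfunE !phi2 add_lfunE scale_lfunE pB_lin.
    by rewrite scalerBr opprD addrACA.
  by rewrite [LHS]surjective_pairing e1 e2.
- move=> D hD; split.
    move=> x y; rewrite scale1r scale0r addr0 /restr_mul !phi1.
    apply: val_inj => /=.
    rewrite !vsprojK ?mu_inB ?pB_B //.
    rewrite pB_id ?D_muB // hDs //.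
    by rewrite mu_pB [RHS]mu_pB pB_pB.
  split.
    by move=> X Y; rewrite phi2 pB_id ?subrr //; apply: D_muB.
  by move=> X; rewrite phi2; exact: pB_Z.
- have decomp : forall D, is_derivation mu t 1 0 D -> forall v,
      D v = vsval ((phi D).1 (vsproj B (pB v))) + (phi D).2 (pB v) + (phi D).2 (v - pB v).
    move=> D hD v; rewrite phi1 !phi2 !vsprojK ?pB_B //.
    rewrite (pB_Z0 (D (v - pB v))); last by apply: D_central.
    rewrite subr0 [pB _ + _]addrC subrK -linearD /=.
    by rewrite [pB v + _]addrC subrK.
  move=> D1 D2 h1 h2 e; apply/lfunP => v.
  by rewrite decomp // [RHS]decomp // e.
- move=> E F hE [hF1 hF2].
  have linD : linear (fun v => vsval (E (vsproj B (pB v))) + F v).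
    move=> a u w; rewrite pB_lin !linearP /=.
    by rewrite scalerDr addrACA.
  pose D := linfun (fun v => vsval (E (vsproj B (pB v))) + F v).
  have DE : forall v, D v = vsval (E (vsproj B (pB v))) + F v.
    by move=> v; rewrite /D linfunE'.
  have hDv : forall v, pB (D v) = vsval (E (vsproj B (pB v))).
    move=> v; apply: pB_uniq; first exact: subvsP.
    by rewrite DE addrC addKr; apply: hF2.
  exists D; split.
    move=> X Y; rewrite scale1r scale0r addr0 !DE.
    rewrite hF1 addr0 muDl (hF2 X Y) addr0 pB_id ?mu_inB //.
    have := hE (vsproj B (pB X)) (vsproj B (pB Y)).
    rewrite /restr_mul scale1r scale0r addr0 !vsprojK ?pB_B // -mu_pB => h.
    rewrite [LHS](_ : _ = vsval (t *: E (vsproj B (mu X Y)))) // h.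
    rewrite vsprojK ?mu_inB //.
    by rewrite (mu_pB _ (pB Y)) [RHS]mu_pB pB_pB.
  have e1 : (phi D).1 = E.
    apply/lfunP => x.
    by rewrite phi1 hDv vsvalK (pB_id _ (subvsP x)) vsvalK.
  have e2 : (phi D).2 = F.
    apply/lfunP => x.
    by rewrite phi2 hDv DE addrC addKr.
  by rewrite [phi D]surjective_pairing e1 e2.
Qed.
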